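(* Let $Y$ be a topological space such that the diagonal $\Delta Y=\{(y,y):y\in Y\}$ is statistically closed in $Y\times Y$, and let $X$ be an open subspace of $Y$ which is not statistically compact. Define $f:Y\to X^s$ by $f(x)=x$ if $x\in X$ and $f(x)=\infty^X$ otherwise. Then $f$ is statistically continuous, where $X^s$ carries the topology $\tau^X_s$.
   Context: For $A\subseteq\mathbb{N}$ let $d_n(A)=|A\cap\{1,\dots,n\}|/n$, $\overline{d}(A)=\limsup_n d_n(A)$, $\underline{d}(A)=\liminf_n d_n(A)$, and $d(A)$ their common value when equal. A sequence in $X$ is a map from an infinite subset $M\subseteq\mathbb{N}$ into $X$, written $(x_n)_{n\in M}$; a subsequence is $(x_n)_{n\in N}$ with $N\subseteq M$ infinite. It is nonthin if $\overline{d}(M)>0$. A nonthin sequence $(x_n)_{n\in M}$ is statistically convergent to $a\in X$ if for every open $U\ni a$, $d(\{n\in M:x_n\notin U\})=0$. The statistical closure $\overline{F}^{ST}$ of $F\subseteq X$ is the set of $x\in X$ such that some nonthin sequence in $F$ is statistically convergent to $x$; $F$ is statistically closed if $\overline{F}^{ST}=F$. A topological space is statistically compact if every nonthin sequence in it has a nonthin subsequence that is statistically convergent to some point of the space; a subset is statistically compact if it is so in the subspace topology. For $(X,\tau)$ not statistically compact, the one point statistical compactification is $X^s=X\cup\{\infty^X\}$ ($\infty^X\notin X$) with topology $\tau^X_s=\tau\cup\{X^s\setminus C: C$ closed and statistically compact subset of $X\}$. A function $f$ is statistically continuous if whenever a nonthin sequence $(x_n)_{n\in K}$ statistically converges to $x$,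 $(f(x_n))_{n\in K}$ statistically converges to $f(x)$. *)

(* Defs.v *)
From HB Require Import structures.
From mathcomp Require Import all_boot all_order all_algebra.
From mathcomp Require Import all_classical all_reals all_analysis.
From mathcomp Require Import Rstruct Rstruct_topology.
Set Implicit Arguments. Unset Strict Implicit. Unset Printing Implicit Defensive.
Import Order.TTheory GRing.Theory Num.Theory.
Local Open Scope classical_set_scope.
Local Open Scope ring_scope.

Notation RR := Rdefinitions.R.

Definition dens (A : set nat) (n : nat) : RR :=
  (\sum_(1 <= k < n.+1) (if `[< A k >] then 1%N else 0%N))%:R / n%:R.

Definition upper_density (A : set nat) : \bar RR :=
  limn_esup (fun n => (dens A n)%:E).

Definition density_zero (A : set nat) : Prop :=
  dens A n @[n --> \oo] --> (0 : RR).

(* A sequence is a map from an index set M ⊆ ℕ; it is nonthin if \overline{d}(M) > 0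
   (this forces M to be infinite). *)
Definition nonthin (M : set nat) : Prop := (0 < upper_density M)%E.

(* A "space" is given by a type T and its family of open sets [op] (a topology on a
   carrier set, possibly presented inside a larger ambient type). *)
Definition stat_conv {T} (op : set (set T)) (M : set nat) (x : nat -> T) (a : T) : Prop :=
  nonthin M /\
  forall U, op U -> U a -> density_zero [set n | M n /\ ~ U (x n)].

Definition stat_closure {T} (op : set (set T)) (F : set T) : set T :=
  [set a | exists (M : set nat) (x : nat -> T),
     nonthin M /\ (forall n, M n -> F (x n)) /\ stat_conv op M x a].

Definition stat_closed {T} (op : set (set T)) (F : set T) : Prop :=
  stat_closure op F = F.

Definition subspace_open {T} (op : set (set T)) (C : set T) : set (set T) :=
  [set V | exists W, op W /\ V = W `&` C].

Definition stat_compact_space {T} (op : set (set T)) (C : set T) : Prop :=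
  forall (M : set nat) (x : nat -> T), nonthin M -> (forall n, M n -> C (x n)) ->
    exists (N : set nat) (a : T),
      N `<=` M /\ nonthin N /\ C a /\ stat_conv op N x a.

Definition stat_compact_in {T} (op : set (set T)) (C : set T) : Prop :=
  stat_compact_space (subspace_open op C) C.

Definition closed_in {T} (op : set (set T)) (S C : set T) : Prop :=
  C `<=` S /\ op (S `\` C).

(* One point statistical compactification X^s = X ∪ {∞^X} of the space (X, opX),
   realized inside [option T]: x ∈ X is [Some x], ∞^X is [None]. *)
Definition Xs_carrier {T} (X : set T) : set (option T) := (Some @` X) `|` [set None].

Definition Xs_open {T} (opX : set (set T)) (X : set T) : set (set (option T)) :=
  [set V | (exists U, opX U /\ V = Some @` U) \/
           (exists C, closed_in opX X C /\ stat_compact_in opX C /\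
                      V = Xs_carrier X `\` (Some @` C))].

Definition stat_continuous {T S} (opT : set (set T)) (opS : set (set S)) (f : T -> S) : Prop :=
  forall (K : set nat) (x : nat -> T) (a : T),
    stat_conv opT K x a -> stat_conv opS K (f \o x) (f a).


Definition to_Xs {Y} (X : set Y) (y : Y) : option Y := if `[< X y >] then Some y else None.

(* Main.v *)
Require Import Defs.
From mathcomp Require Import all_boot all_order all_algebra.
From mathcomp Require Import all_classical all_reals all_analysis.
From mathcomp Require Import Rstruct Rstruct_topology.
Local Open Scope classical_set_scope.

Section Helpers.
Import Order.TTheory GRing.Theory Num.Theory.
Local Open Scope ring_scope.

Lemma dens_ge0 A n : 0 <= dens A n.
Proof. by rewrite /dens divr_ge0. Qed.

Lemma dens_le A B n : A `<=` B -> dens A n <= dens B n.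
Proof.
move=> AB; rewrite /dens; apply: ler_wpM2r; first by rewrite invr_ge0 ler0n.
rewrite ler_nat; apply: leq_sum => k _.
by case: (asboolP (A k)) => Ak //; rewrite asboolT //; apply: AB.
Qed.

Lemma dens_U A B n : dens (A `|` B) n <= dens A n + dens B n.
Proof.
rewrite /dens -mulrDl -natrD; apply: ler_wpM2r; first by rewrite invr_ge0 ler0n.
rewrite ler_nat -big_split /=; apply: leq_sum => k _.
case: (asboolP ((A `|` B) k)) => //= -[Ak|Bk].
  by rewrite asboolT.
by rewrite (asboolT Bk) addn1.
Qed.

Lemma dz_sub A B : A `<=` B -> density_zero B -> density_zero A.
Proof.
move=> AB dB; rewrite /density_zero.
apply: (@squeeze_cvgr _ _ _ _ (fun=> 0) (fun n => dens B n)) => //.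
  by apply: nearW => n; rewrite dens_ge0 dens_le.
exact: cvg_cst.
Qed.

Lemma dz_union A B : density_zero A -> density_zero B -> density_zero (A `|` B).
Proof.
move=> dA dB; rewrite /density_zero.
have := @cvgD RR RR^o _ _ _ (dens A) (dens B) 0 0 dA dB.
rewrite addr0 => hAB.
apply: (@squeeze_cvgr _ _ _ _ (fun=> 0) (fun n => dens A n + dens B n)) => //.
  by apply: nearW => n; rewrite dens_ge0 dens_U.
  exact: cvg_cst.
exact: hAB.
Qed.

Lemma not_dz_nonthin A : ~ density_zero A -> nonthin A.
Proof.
move=> ndz; rewrite /nonthin; apply/negP => h; apply: ndz.
have h' : (upper_density A <= 0)%E by rewrite leNgt; apply/negP.
have := @limn_esup_le_cvg _ (fun n => (dens A n)%:E) 0%E h'.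
move=> /(_ (fun n => dens_ge0 A n)) /fine_cvg.
by apply: cvg_trans; apply: cvg_app.
Qed.

End Helpers.
Arguments dz_sub {A B}.
Arguments dz_union {A B}.
Arguments not_dz_nonthin {A}.

Lemma to_Xs_in {Y} (X : set Y) y : X y -> to_Xs X y = Some y.
Proof. by move=> Xy; rewrite /to_Xs asboolT. Qed.

Lemma to_Xs_out {Y} (X : set Y) y : ~ X y -> to_Xs X y = None.
Proof. by move=> Xy; rewrite /to_Xs asboolF. Qed.

Theorem mainTheorem19 (Y : topologicalType) (X : set Y) :
  stat_closed (@open (Y * Y)%type) (@diagonal Y) ->
  open X ->
  ~ stat_compact_in (@open Y) X ->
  stat_continuous (@open Y) (Xs_open (subspace_open (@open Y) X) X) (to_Xs X).
Proof.
move=> Hdiag oX _ K x a [ntK Hc]; split => // V oV Va.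
move: Va; case: oV => [[U [[W [oW ->]] ->]] | [C [[CX [W [oW eqW]]] [Cc ->]]]] Va.
- case: (pselect (X a)) => Xa; last first.
    by move: Va; rewrite to_Xs_out // => -[b].
  move: Va; rewrite to_Xs_in // => -[b Wb [eb]]; rewrite eb in Wb.
  apply: (dz_sub _ (Hc _ (openI oW oX) Wb)).
  move=> n /= [Kn nV]; split => // hx; apply: nV.
  by exists (x n) => //; rewrite to_Xs_in //; case: hx.
- have key : [set n | K n /\ ~ (Xs_carrier X `\` Some @` C) ((to_Xs X \o x) n)]
      `<=` [set n | K n /\ C (x n)].
    move=> n /= [Kn nV]; split => //; apply: contrapT => nC; apply: nV.
    case: (pselect (X (x n))) => Xx.
      rewrite to_Xs_in //; split; first by left; exists (x n).
      by move=> [c Ccn [ec]]; apply: nC; rewrite -ec.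
    rewrite to_Xs_out //; split; first by right.
    by move=> [c _].
  apply: (dz_sub key).
  case: (pselect (X a)) => Xa.
    have nCa : ~ C a.
      move: Va; rewrite to_Xs_in // => -[_ H] Ca; apply: H; by exists a.
    have WXa : (W `&` X) a by move: eqW => /(congr1 (fun S => S a)) <-; split.
    apply: (dz_sub _ (Hc _ (openI oW oX) WXa)).
    move=> n /= [Kn Cn]; split => // hx.
    have : (X `\` C) (x n) by rewrite eqW. by case.
  apply: contrapT => ndz.
  have ntM := not_dz_nonthin ndz.
  have [N [c [NM [ntN [Cc' [_ scN]]]]]] := Cc _ x ntM (fun n Mn => Mn.2).
  have : stat_closure (@open (Y * Y)%type) (@diagonal Y) (a, c).
    exists N, (fun n => (x n, x n)); split => //; split => //.
    split => // U oU Uac.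
    have := open_nbhs_nbhs (conj oU Uac).
    case=> [[P Q] /= [nP nQ] sPQ].
    move: nP; rewrite nbhsE => -[A [oA Aa] AP].
    move: nQ; rewrite nbhsE => -[B [oB Bc] BQ].
    have h1 : density_zero [set n | N n /\ ~ A (x n)].
      apply: (dz_sub _ (Hc _ oA Aa)).
      by move=> n /= [Nn nA]; split => //; case: (NM _ Nn).
    have h2 : density_zero [set n | N n /\ ~ B (x n)].
      have oBXC : subspace_open (subspace_open open X) C (B `&` X `&` C).
        by exists (B `&` X); split => //; exists B.
      apply: (dz_sub _ (scN _ oBXC _)); last by split => //; split => //; apply: CX.
      by move=> n /= [Nn nB]; split => // -[[]].
    apply: (dz_sub _ (dz_union h1 h2)).
    move=> n /= [Nn nU]; apply: contrapT => hn; apply: nU; apply: sPQ.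
    split; [apply: AP | apply: BQ]; apply: contrapT => hh; apply: hn.
      by left.
    by right.
  rewrite Hdiag /diagonal /= => ac.
  by apply: Xa; rewrite ac; apply: CX.
Qed.
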